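(* Let $T=4$ and let $P$ be a probability distribution on pairs of binary sequences $(A,B)=(A_{1:4},B_{1:4})\in\{0,1\}^4\times\{0,1\}^4$ belonging to the class $\mathcal P_0$ of non-causal models, i.e. there exist a (possibly infinite) hidden attribute space, a probability distribution $P(R_A,R_B\mid E)$ over pairs of hidden attributes $(R_A,R_B)$, and conditional distributions such that $$P(A_{1:4},B_{1:4}\mid E)=\sum_{R_A,R_B}P(R_A,R_B\mid E)\,P(A_1\mid R_A)\,P(B_1\mid R_B)\prod_{t=2}^{4}P(A_t\mid A_{t-1},R_A)\,P(B_t\mid B_{t-1},R_B),$$ where the transitions are stationary: $P(A_t\mid A_{t-1},R_A)=P(A_{t'}\mid A_{t'-1},R_A)$ and $P(B_t\mid B_{t-1},R_B)=P(B_{t'}\mid B_{t'-1},R_B)$ for all $t,t'$ (the sum over hidden attributes being understood as an integral against a probability measure when the attribute space is infinite). Define $$c^{(1)}(A,B)=\Big(\mathbf 1\{A_2=B_2\neq A_3=B_3\}-\mathbf 1\{A_2=B_3\neq A_3=B_2\}\Big)\Big(1-\mathbf 1\{A_1\neq A_4\}\,\mathbf 1\{B_1\neq B_4\}\Big).$$ Then $\langle c^{(1)}(A,B)\rangle_P:=\sum_{A,B\in\{0,1\}^4}P(A,B\mid E)\,c^{(1)}(A,B)=0$.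
   Context: Here $A_t$ and $B_t$ denote the binary actions of two individuals (Alice and Bob) at time $t$, $E$ denotes the presence of a directed social-network edge from Alice to Bob, and $R_A,R_B$ are unobserved attributes of Alice and Bob whose joint distribution given $E$ is arbitrary. In a non-causal model, Bob's action at time $t$ depends only on his previous action and his hidden attribute (not on Alice's previous action), so $(A,B)$ is a mixture, over the hidden attributes, of products of two independent stationary (time-homogeneous) Markov chains on $\{0,1\}$. $\mathbf 1\{\cdot\}$ denotes the indicator function, and a chained condition such as $A_2=B_2\neq A_3=B_3$ means $A_2=B_2$, $A_3=B_3$ and $A_2\neq A_3$. *)

(* Defs.v *)
From HB Require Import structures.
From mathcomp Require Import all_boot all_order all_algebra.
From mathcomp Require Import all_classical all_reals all_analysis.
Set Implicit Arguments. Unset Strict Implicit. Unset Printing Implicit Defensive.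
Import Order.TTheory GRing.Theory Num.Theory.
Local Open Scope ring_scope.

(* A binary sequence of length T = 4: x (inord 0) = X_1, ..., x (inord 3) = X_4. *)
Notation bseq4 := {ffun 'I_4 -> bool}.
Definition at4 (x : bseq4) (k : nat) : bool := x (@inord 3 k).

Definition bern {R : ringType} (p : R) (x : bool) : R := if x then p else 1 - p.

(* Probability of a path of a stationary Markov chain on {0,1}:
   p1 = P(X_1 = 1), tr y = P(X_t = 1 | X_{t-1} = y) (same for every t). *)
Definition chain_prob {R : ringType} (p1 : R) (tr : bool -> R) (x : bseq4) : R :=
  bern p1 (at4 x 0) * bern (tr (at4 x 0)) (at4 x 1)
  * bern (tr (at4 x 1)) (at4 x 2) * bern (tr (at4 x 2)) (at4 x 3).

(* c^(1)(A,B); A_t = at4 a (t-1). *)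
Definition c1 {R : ringType} (a b : bseq4) : R :=
  (([&& at4 a 1 == at4 b 1, at4 a 2 == at4 b 2 & at4 a 1 != at4 a 2])%:R
   - ([&& at4 a 1 == at4 b 2, at4 a 2 == at4 b 1 & at4 a 1 != at4 a 2])%:R)
  * (1 - ((at4 a 0 != at4 a 3) && (at4 b 0 != at4 b 3))%:R).

(* Main.v *)
Require Import Defs.
From HB Require Import structures.
From mathcomp Require Import all_boot all_order all_algebra.
From mathcomp Require Import all_classical all_reals all_analysis.
From mathcomp Require Import ring.
Import Order.TTheory GRing.Theory Num.Theory.
Local Open Scope ring_scope.

Definition mk4 (x0 x1 x2 x3 : bool) : bseq4 :=
  [ffun i : 'I_4 => nth false [:: x0; x1; x2; x3] i].

Lemma at4_mk x0 x1 x2 x3 :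
  [/\ at4 (mk4 x0 x1 x2 x3) 0 = x0, at4 (mk4 x0 x1 x2 x3) 1 = x1,
      at4 (mk4 x0 x1 x2 x3) 2 = x2 & at4 (mk4 x0 x1 x2 x3) 3 = x3].
Proof. by rewrite /at4 !ffunE !inordK. Qed.

Lemma sum_bseq4 (R : comRingType) (F : bseq4 -> R) :
  \sum_a F a = \sum_(x0 : bool) \sum_(x1 : bool) \sum_(x2 : bool) \sum_(x3 : bool)
     F (mk4 x0 x1 x2 x3).
Proof.
rewrite (reindex (fun t : bool * bool * bool * bool => mk4 t.1.1.1 t.1.1.2 t.1.2 t.2)) /=.
  rewrite !pair_bigA; exact: erefl.
apply: onW_bij.
exists (fun a : bseq4 => (a (inord 0), a (inord 1), a (inord 2), a (inord 3))).
  by move=> [[[x0 x1] x2] x3]; rewrite /mk4 !ffunE !inordK.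
move=> a; apply/ffunP => i; rewrite /mk4 ffunE /=.
case: i => [[|[|[|[|n]]]] Hi] //=; congr (a _); apply: val_inj; by rewrite /= inordK.
Qed.

Lemma at4_0 x0 x1 x2 x3 : at4 (mk4 x0 x1 x2 x3) 0 = x0. Proof. by case: (at4_mk x0 x1 x2 x3). Qed.
Lemma at4_1 x0 x1 x2 x3 : at4 (mk4 x0 x1 x2 x3) 1 = x1. Proof. by case: (at4_mk x0 x1 x2 x3). Qed.
Lemma at4_2 x0 x1 x2 x3 : at4 (mk4 x0 x1 x2 x3) 2 = x2. Proof. by case: (at4_mk x0 x1 x2 x3). Qed.
Lemma at4_3 x0 x1 x2 x3 : at4 (mk4 x0 x1 x2 x3) 3 = x3. Proof. by case: (at4_mk x0 x1 x2 x3). Qed.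

Lemma alg (R : comRingType) (pa pb : R) (ta tb : bool -> R) :
  \sum_a \sum_b chain_prob pa ta a * chain_prob pb tb b * c1 a b = 0.
Proof.
under eq_bigr => a _ do rewrite sum_bseq4 !big_bool.
rewrite sum_bseq4 !big_bool.
rewrite /c1 /chain_prob !at4_0 !at4_1 !at4_2 !at4_3 /=.
ring.
Qed.

Lemma split3 (R : comRingType) (x y z : bool) :
  (x%:R - y%:R) * (1 - z%:R) = (x && ~~ z)%:R - (y && ~~ z)%:R :> R.
Proof. by case: x; case: y; case: z => /=; ring. Qed.

Lemma c1_split (R : comRingType) (a b : bseq4) :
  c1 a b = ([&& at4 a 1 == at4 b 1, at4 a 2 == at4 b 2 & at4 a 1 != at4 a 2]
             && ~~ ((at4 a 0 != at4 a 3) && (at4 b 0 != at4 b 3)))%:R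
         - ([&& at4 a 1 == at4 b 2, at4 a 2 == at4 b 1 & at4 a 1 != at4 a 2]
             && ~~ ((at4 a 0 != at4 a 3) && (at4 b 0 != at4 b 3)))%:R :> R.
Proof. by rewrite /c1 split3. Qed.

Lemma bern_ge0 (R : realType) (p : R) x : 0 <= p <= 1 -> 0 <= bern p x.
Proof. case/andP=> h0 h1; case: x => //=; by rewrite subr_ge0. Qed.

Lemma mbern (R : realType) (d : measure_display) (T : measurableType d)
  (f : T -> R) x :
  measurable_fun setT f -> measurable_fun setT (fun r => bern (f r) x).
Proof.
move=> mf; case: x => //=.
by apply: measurable_realfun.measurable_funB => //; exact: measurable_cst.
Qed.

Lemma chain_ge0 (R : realType) (p : R) (tr : bool -> R) a :
  0 <= p <= 1 -> (forall y, 0 <= tr y <= 1) -> 0 <= chain_prob p tr a.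
Proof.
move=> hp ht; rewrite /chain_prob.
by rewrite !mulr_ge0 // ?bern_ge0.
Qed.

Lemma mchain (R : realType) (d : measure_display) (T : measurableType d)
  (p : T -> R) (tr : bool -> T -> R) a :
  measurable_fun setT p -> (forall y, measurable_fun setT (tr y)) ->
  measurable_fun setT (fun r => chain_prob (p r) (fun y => tr y r) a).
Proof.
move=> mp mt; rewrite /chain_prob.
apply: measurable_realfun.measurable_funM; last exact: mbern.
apply: measurable_realfun.measurable_funM; last exact: mbern.
apply: measurable_realfun.measurable_funM; exact: mbern.
Qed.

Theorem mainTheorem1 (R : realType) (dA dB : measure_display)
  (TA : measurableType dA) (TB : measurableType dB)
  (mu : probability (TA * TB)%type R)
  (pA1 : TA -> R) (trA : bool -> TA -> R)
  (pB1 : TB -> R) (trB : bool -> TB -> R)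
  (hpA1 : forall r, 0 <= pA1 r <= 1) (htrA : forall y r, 0 <= trA y r <= 1)
  (hpB1 : forall r, 0 <= pB1 r <= 1) (htrB : forall y r, 0 <= trB y r <= 1)
  (mpA1 : measurable_fun setT pA1) (mtrA : forall y, measurable_fun setT (trA y))
  (mpB1 : measurable_fun setT pB1) (mtrB : forall y, measurable_fun setT (trB y))
  (P : bseq4 -> bseq4 -> R)
  (hP : forall a b, ((P a b)%:E =
     \int[mu]_(r in setT)
        (chain_prob (pA1 r.1) (fun y => trA y r.1) a
         * chain_prob (pB1 r.2) (fun y => trB y r.2) b)%:E)%E) :
  \sum_(a : bseq4) \sum_(b : bseq4) P a b * c1 a b = 0.
Proof.
pose F (p : bseq4 * bseq4) (r : TA * TB) :=
  chain_prob (pA1 r.1) (fun y => trA y r.1) p.1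
  * chain_prob (pB1 r.2) (fun y => trB y r.2) p.2.
have F0 p r : 0 <= F p r.
  by rewrite /F mulr_ge0 // chain_ge0.
have mF p : measurable_fun setT (F p).
  apply: measurable_realfun.measurable_funM.
    apply: (@mchain _ _ _ (pA1 \o fst) (fun y => trA y \o fst)).
      exact: measurableT_comp.
    by move=> y; exact: measurableT_comp.
  apply: (@mchain _ _ _ (pB1 \o snd) (fun y => trB y \o snd)).
    exact: measurableT_comp.
  by move=> y; exact: measurableT_comp.
have key (k : bseq4 * bseq4 -> R) : (forall p, 0 <= k p) ->
  ((\sum_p P p.1 p.2 * k p)%:E = \int[mu]_(r in setT) (\sum_p F p r * k p)%:E)%E.
  move=> k0.
  under eq_integral => r _ do rewrite -sumEFin.
  rewrite ge0_integral_sum //; last first.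
  - by move=> p r _; rewrite lee_fin mulr_ge0.
  - move=> p; apply/measurable_realfun.measurable_EFinP.
    by apply: measurable_realfun.measurable_funM => //; exact: measurable_cst.
  rewrite -sumEFin; apply: eq_bigr => p _.
  under eq_integral => r _ do rewrite EFinM.
  rewrite ge0_integralZr //; first by rewrite EFinM hP.
  all: try by move=> r _; rewrite lee_fin.
  all: try by rewrite lee_fin.
  exact: (proj2 (measurable_realfun.measurable_EFinP _ (F p)) (mF p)).
pose e (a b : bseq4) := ~~ ((at4 a 0 != at4 a 3) && (at4 b 0 != at4 b 3)).
pose kp (p : bseq4 * bseq4) : R :=
  ([&& at4 p.1 1 == at4 p.2 1, at4 p.1 2 == at4 p.2 2 & at4 p.1 1 != at4 p.1 2]
   && e p.1 p.2)%:R.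
pose km (p : bseq4 * bseq4) : R :=
  ([&& at4 p.1 1 == at4 p.2 2, at4 p.1 2 == at4 p.2 1 & at4 p.1 1 != at4 p.1 2]
   && e p.1 p.2)%:R.
have split (G : bseq4 * bseq4 -> R) :
  \sum_p G p * c1 p.1 p.2 = \sum_p G p * kp p - \sum_p G p * km p.
  by rewrite -sumrB; apply: eq_bigr => p _; rewrite c1_split mulrBr.
have pw r : \sum_p F p r * kp p = \sum_p F p r * km p.
  have := alg _ (pA1 r.1) (pB1 r.2) (fun y => trA y r.1) (fun y => trB y r.2).
  rewrite pair_bigA /= (split (fun p => F p r)) => /eqP; rewrite subr_eq0 => /eqP.
  done.
rewrite pair_bigA /= (split (fun p => P p.1 p.2)); apply/eqP; rewrite subr_eq0; apply/eqP.
apply: EFin_inj; rewrite (key kp) ?(key km); last 2 first.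
- by move=> p; rewrite /km ler0n.
- by move=> p; rewrite /kp ler0n.
by apply: eq_integral => r _; rewrite pw.
Qed.
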